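(* Let $p$ be a prime, let $c,d$ be positive integers, let $X$ be a set with $d$ elements, let $L_c(X)$ be the free nilpotent $\mathbb{Z}_p$-Lie algebra of class $c$ on $X$, regarded inside $\widetilde{L}_c(X)=L_c(X)\otimes_{\mathbb{Z}_p}\mathbb{Q}_p$, and let $$\widehat{L}_c(X)=L_c(X)+\tfrac{1}{p}\gamma_2(L_c(X))+\tfrac{1}{p^2}\gamma_3(L_c(X))+\dots+\tfrac{1}{p^{c-1}}\gamma_c(L_c(X))\subseteq\widetilde{L}_c(X).$$ Then: (a) $\widehat{L}_c(X)$ is a finitely generated powerful $\mathbb{Z}_p$-Lie algebra of nilpotency class $c$; (b) the rank of $\widehat{L}_c(X)$ is bounded by a function of $c$ and $d$ only; (c) the index $|\widehat{L}_c(X):L_c(X)|$ is bounded by a function of $p,c,d$ only.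
   Context: $L_c(X)$ is the free $\mathbb{Z}_p$-Lie algebra on $X$ modulo the $(c+1)$-st term of its lower central series; $\gamma_1(L)=L$, $\gamma_{i+1}(L)=[\gamma_i(L),L]$. A $\mathbb{Z}_p$-Lie algebra $L$ is powerful if $[L,L]\subseteq pL$. The rank of a $\mathbb{Z}_p$-Lie algebra (or module) is the maximum, over all $\mathbb{Z}_p$-submodules $M$, of the minimal number of generators of $M$ as a $\mathbb{Z}_p$-module. *)

(* Defs.v *)
From HB Require Import structures.
From mathcomp Require Import all_boot all_order all_algebra.
From mathcomp Require Import boolp.
From Stdlib Require Import ProofIrrelevance.
Set Implicit Arguments.
Unset Strict Implicit.
Unset Printing Implicit Defensive.
Import Order.TTheory GRing.Theory Num.Theory.
Local Open Scope ring_scope.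

(* The p-adic integers Z_p, as the inverse limit of Z/p^(n+1)Z:        *)
(* a p-adic integer is a sequence (a_n) of integers with               *)
(* 0 <= a_n < p^(n+1) (canonical residues) and a_(n+1) = a_n mod p^(n+1). *)
Section Padic.
Variable p : nat.
Local Notation md n := ((p ^ n.+1)%N%:Z).

Record padic := Padic {
  pval : nat -> int;
  pval_mod : forall n, modz (pval n) (md n) = pval n;
  pval_compat : forall n, modz (pval n.+1) (md n) = pval n }.

HB.instance Definition _ := gen_eqMixin padic.
HB.instance Definition _ := gen_choiceMixin padic.

Lemma padic_eq (a b : padic) : pval a = pval b -> a = b.
Proof.
case: a b => [a am ac] [b bm bc] /= eab; subst b.
by rewrite (proof_irrelevance _ am bm) (proof_irrelevance _ ac bc).
Qed.

Lemma red_md (x : int) n : modz (modz x (md n.+1)) (md n) = modz x (md n).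
Proof.
rewrite {2}(divz_eq x (md n.+1)).
have -> : md n.+1 = (p%:Z * md n) by rewrite expnS PoszM.
by rewrite mulrA modzMDl.
Qed.

Definition pzero : padic.
Proof. by exists (fun _ => 0) => n; rewrite mod0z. Defined.

Definition pone : padic.
Proof. by exists (fun n => modz 1 (md n)) => n; rewrite ?modz_mod ?red_md. Defined.

Definition padd (a b : padic) : padic.
Proof.
exists (fun n => modz (pval a n + pval b n) (md n)) => n; first by rewrite modz_mod.
by rewrite red_md -modzDm !pval_compat.
Defined.

Definition popp (a : padic) : padic.
Proof.
exists (fun n => modz (- pval a n) (md n)) => n; first by rewrite modz_mod.
by rewrite red_md -modzNm pval_compat.
Defined.

Definition pmul (a b : padic) : padic.
Proof.
exists (fun n => modz (pval a n * pval b n) (md n)) => n; first by rewrite modz_mod.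
by rewrite red_md -modzMm !pval_compat.
Defined.

Lemma paddA : associative padd.
Proof.
move=> a b c; apply: padic_eq; apply: funext => n /=.
by rewrite modzDmr modzDml addrA.
Qed.
Lemma paddC : commutative padd.
Proof. by move=> a b; apply: padic_eq; apply: funext => n /=; rewrite addrC. Qed.
Lemma padd0 : left_id pzero padd.
Proof. by move=> a; apply: padic_eq; apply: funext => n /=; rewrite add0r pval_mod. Qed.
Lemma paddN : left_inverse pzero popp padd.
Proof.
by move=> a; apply: padic_eq; apply: funext => n /=; rewrite modzDml addNr mod0z.
Qed.

HB.instance Definition _ := GRing.isZmodule.Build padic paddA paddC padd0 paddN.

Lemma pmulA : associative pmul.
Proof.
move=> a b c; apply: padic_eq; apply: funext => n /=.
by rewrite modzMmr modzMml mulrA.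
Qed.
Lemma pmulC : commutative pmul.
Proof. by move=> a b; apply: padic_eq; apply: funext => n /=; rewrite mulrC. Qed.
Lemma pmul1 : left_id pone pmul.
Proof. by move=> a; apply: padic_eq; apply: funext => n /=; rewrite modzMml mul1r pval_mod. Qed.
Lemma pmulDl : left_distributive pmul (@GRing.add padic).
Proof.
move=> a b c; apply: padic_eq; apply: funext => n /=.
by rewrite modzMml modzDm mulrDl.
Qed.

HB.instance Definition _ := GRing.Zmodule_isComPzRing.Build padic pmulA pmulC pmul1 pmulDl.

End Padic.

Section Lie.
Variables (R : comPzRingType) (V : lmodType R).

Definition lie_bracket (br : V -> V -> V) : Prop :=
  [/\ (forall a u v w, br (a *: u + v) w = a *: br u w + br v w),
      (forall a u v w, br u (a *: v + w) = a *: br u v + br u w),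
      (forall u, br u u = 0) &
      (forall u v w, br u (br v w) + br v (br w u) + br w (br u v) = 0)].

Inductive span (S : V -> Prop) : V -> Prop :=
  | span0 : span S 0
  | span_gen v : S v -> span S v
  | span_add u v : span S u -> span S v -> span S (u + v)
  | span_scale a v : span S v -> span S (a *: v).

Inductive lie_span (br : V -> V -> V) (G : V -> Prop) : V -> Prop :=
  | lspan0 : lie_span br G 0
  | lspan_gen v : G v -> lie_span br G v
  | lspan_add u v : lie_span br G u -> lie_span br G v -> lie_span br G (u + v)
  | lspan_scale a v : lie_span br G v -> lie_span br G (a *: v)
  | lspan_br u v : lie_span br G u -> lie_span br G v -> lie_span br G (br u v).

Definition submodule (S : V -> Prop) : Prop :=
  [/\ S 0, (forall u v, S u -> S v -> S (u + v)) & (forall a u, S u -> S (a *: u))].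

Definition lie_subalg (br : V -> V -> V) (S : V -> Prop) : Prop :=
  submodule S /\ (forall u v, S u -> S v -> S (br u v)).

Definition commut (br : V -> V -> V) (A B : V -> Prop) : V -> Prop :=
  span (fun w => exists u v, [/\ A u, B v & w = br u v]).

(* lower central series, 1-indexed: gamma 1 = L, gamma (i+1) = [gamma i, L]
   (gamma 0 is also set to L, and is never used) *)
Fixpoint gamma (br : V -> V -> V) (L : V -> Prop) (i : nat) : V -> Prop :=
  match i with
  | 0 => L
  | i'.+1 => match i' with 0 => L | _ => commut br (gamma br L i') L end
  end.

Definition nil_class (br : V -> V -> V) (S : V -> Prop) (c : nat) : Prop :=
  forall v, gamma br S c.+1 v -> v = 0.

Definition lie_fin_gen (br : V -> V -> V) (S : V -> Prop) : Prop :=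
  exists gs : seq V, forall v, S v <-> lie_span br (fun w => w \in gs) v.

Definition rank_le (S : V -> Prop) (r : nat) : Prop :=
  forall M : V -> Prop, submodule M -> (forall v, M v -> S v) ->
    exists gs : seq V, (size gs <= r)%N /\
      forall v, M v <-> span (fun w => w \in gs) v.

Definition index_le (L S : V -> Prop) (g : nat) : Prop :=
  (forall v, L v -> S v) /\
  exists reps : seq V, (size reps <= g)%N /\
    forall v, S v -> exists2 r, r \in reps & L (v - r).

End Lie.

Definition free_nilpotent_on (R : comPzRingType) (V : lmodType R) (br : V -> V -> V) (L : V -> Prop) (c d : nat)
    (x : 'I_d -> V) : Prop :=
  [/\ lie_subalg br L,
      (forall v, L v <-> lie_span br (fun w => exists i, w = x i) v),
      (forall v, gamma br L c.+1 v -> v = 0) &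
      (forall (W : lmodType R) (brW : W -> W -> W), lie_bracket brW ->
         (forall w, gamma brW (fun _ => True) c.+1 w -> w = 0) ->
         forall f : 'I_d -> W, exists phi : V -> W,
           [/\ (forall i, phi (x i) = f i),
               (forall a u v, L u -> L v -> phi (a *: u + v) = a *: phi u + phi v) &
               (forall u v, L u -> L v -> phi (br u v) = brW (phi u) (phi v))])].


(* V is L (x)_{Z_p} Q_p : multiplication by p is bijective on V (so V is a
   Q_p-vector space) and every vector has a p-power multiple in L. *)
Definition qp_envelope (p : nat) (V : lmodType (padic p)) (L : V -> Prop) : Prop :=
  bijective (fun v : V => (p%:R : padic p) *: v) /\
  (forall v : V, exists k : nat, L ((p ^ k)%:R *: v)).

Definition powerful (p : nat) (V : lmodType (padic p)) (br : V -> V -> V)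
    (S : V -> Prop) : Prop :=
  forall w, commut br S S w -> exists u, S u /\ w = (p%:R : padic p) *: u.

(* Lhat = L + (1/p) gamma_2(L) + ... + (1/p^(c-1)) gamma_c(L) inside V *)
Definition Lhat (p : nat) (V : lmodType (padic p)) (br : V -> V -> V)
    (L : V -> Prop) (c : nat) : V -> Prop :=
  fun v => exists vs : 'I_c -> V,
    v = \sum_(i < c) vs i /\
    forall i : 'I_c, gamma br L i.+1 ((p ^ i)%:R *: vs i).

(* Main.v *)
Require Import Defs.
From HB Require Import structures.
From mathcomp Require Import all_boot all_order all_algebra boolp.
From mathcomp Require Import ring.
Set Implicit Arguments. Unset Strict Implicit. Unset Printing Implicit Defensive.
Import Order.TTheory GRing.Theory Num.Theory.
Local Open Scope ring_scope.
Local Notation span := Defs.span.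

Section PadicFacts.
Variable p : nat.
Hypothesis pr : prime p.
Local Notation md n := ((p ^ n.+1)%N%:Z).
Local Notation Zp := (padic p).

Lemma p_gt0 : (0 < p)%N. Proof. exact: prime_gt0. Qed.
Lemma md_gt0 n : 0 < md n.
Proof. by rewrite ltz_nat expn_gt0 p_gt0. Qed.
Lemma md_neq0 n : md n != 0.
Proof. by rewrite gt_eqF // md_gt0. Qed.

Lemma pvalM (a b : Zp) n : pval (a * b) n = modz (pval a n * pval b n) (md n).
Proof. by []. Qed.
Lemma pvalD (a b : Zp) n : pval (a + b) n = modz (pval a n + pval b n) (md n).
Proof. by []. Qed.
Lemma pvalN (a : Zp) n : pval (- a) n = modz (- pval a n) (md n).
Proof. by []. Qed.
Lemma pval1 n : pval (1 : Zp) n = modz 1 (md n).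
Proof. by []. Qed.
Lemma pval0 n : pval (0 : Zp) n = 0.
Proof. by []. Qed.
Lemma pvalB (a b : Zp) n : pval (a - b) n = modz (pval a n - pval b n) (md n).
Proof. by rewrite pvalD pvalN modzDmr. Qed.
Lemma pval_natr (r : nat) n : pval (r%:R : Zp) n = modz r (md n).
Proof.
elim: r => [|r IH]; first by rewrite pval0 mod0z.
by rewrite mulrS pvalD IH pval1 modzDm intS.
Qed.

Lemma pval_ge0 (a : Zp) n : 0 <= pval a n.
Proof. by rewrite -pval_mod modz_ge0 // md_neq0. Qed.
Lemma pval_lt (a : Zp) n : pval a n < md n.
Proof. by rewrite -pval_mod ltz_pmod // md_gt0. Qed.

Lemma modz_uniq (x y M : int) : 0 <= y < M -> (M %| x - y)%Z -> modz x M = y.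
Proof.
move=> /andP[y0 yM] H.
have : (x == y %[mod M])%Z by rewrite eqz_mod_dvd.
move/eqP => ->; apply: modz_small; by rewrite y0 yM.
Qed.

Lemma md_dvd j k : (j <= k)%N -> (md j %| md k)%Z.
Proof. by move=> jk; rewrite dvdzE /= dvdn_exp2l. Qed.

Lemma pval_dvd (a : Zp) j k : (j <= k)%N -> (md j %| pval a k - pval a j)%Z.
Proof.
move=> /subnK <-; elim: (k - j)%N => [|t IH]; first by rewrite add0n subrr dvdz0.
have H1 : (md (t + j) %| pval a (t + j).+1 - pval a (t + j))%Z.
  by rewrite -eqz_mod_dvd pval_compat pval_mod.
have -> : pval a (t.+1 + j) - pval a j =
  (pval a (t + j).+1 - pval a (t + j)) + (pval a (t + j) - pval a j).
  by rewrite addSn addrA subrK.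
rewrite rpredD //; apply: dvdz_trans H1; apply: md_dvd; exact: leq_addl.
Qed.

Lemma pval_modle (a : Zp) j k : (j <= k)%N -> modz (pval a k) (md j) = pval a j.
Proof.
move=> jk; apply: modz_uniq; first by rewrite pval_ge0 pval_lt.
exact: pval_dvd.
Qed.

Lemma padic_neq0 (a : Zp) : a != 0 -> exists n, pval a n != 0.
Proof.
move=> a0; apply/not_existsP => H; move/eqP: a0; apply.
apply: padic_eq; apply: funext => n /=.
by have /negP := H n; rewrite negbK => /eqP.
Qed.

Lemma padic_divk (a : Zp) k : (forall n, (n < k)%N -> pval a n = 0) ->
  exists b : Zp, a = (p ^ k)%:R * b.
Proof.
move=> H0.
have Hdiv : forall n, ((p ^ k)%N%:Z %| pval a (n + k))%Z.
  move=> n; case: k H0 => [|k] H0; first by rewrite expn0 dvd1z.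
  have := pval_dvd a (ltnW (leq_addl n k.+1)).
  by rewrite (H0 k) // subr0.
set P := ((p ^ k)%N%:Z) in Hdiv *.
have P0 : P != 0 by rewrite /P gt_eqF // ltz_nat expn_gt0 prime_gt0.
pose bv n := modz (divz (pval a (n + k)) P) (md n).
have mdM n : md (n + k) = md n * P by rewrite /P -PoszM -expnD addSn.
have bmod : forall n, modz (bv n) (md n) = bv n by move=> n; rewrite modz_mod.
have bcompat : forall n, modz (bv n.+1) (md n) = bv n.
  move=> n; rewrite /bv red_md.
  apply/eqP; rewrite eqz_mod_dvd.
  have := pval_dvd a (leqnSn (n + k)); rewrite -addSn mdM.
  rewrite -(divzK (Hdiv n)) -(divzK (Hdiv n.+1)) -mulrBl.
  by rewrite dvdz_mul2r // !mulzK.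
exists (Padic bmod bcompat); apply: padic_eq; apply: funext => n.
rewrite pvalM pval_natr /= /bv modzMm.
rewrite mulrC divzK; last exact: Hdiv.
by rewrite pval_modle // leq_addr.
Qed.

Definition punit (u : Zp) := exists w, u * w = 1.

Lemma punit_mul (u v : Zp) : punit u -> punit v -> punit (u * v).
Proof.
move=> [w uw] [w' vw]; exists (w * w').
by rewrite mulrACA uw mul1r vw.
Qed.

Lemma coprime_md (u : Zp) n : pval u 0 != 0 -> coprimez (pval u n) (md n).
Proof.
move=> u0; rewrite coprimezE /= coprimeXr // coprime_sym prime_coprime //.
apply/negP => pu.
have : (p%:Z %| pval u n)%Z by rewrite dvdzE.
have := pval_dvd u (leq0n n).
rewrite expn1 => H1 H2.
have : (p%:Z %| pval u 0)%Z.
  by have := rpredB H2 H1; rewrite opprB addrC subrK.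
move/dvdz_mod0P; rewrite -[X in (X %% _)%Z](pval_mod u 0) expn1 modz_mod pval_mod.
by move/eqP; rewrite (negbTE u0).
Qed.

Lemma punit_digit (u : Zp) : pval u 0 != 0 -> punit u.
Proof.
move=> u0.
pose s n := projT1 (Bezoutz (pval u n) (md n)).
have sP : forall n, (md n %| s n * pval u n - 1)%Z.
  move=> n; rewrite /s; case: (Bezoutz _ _) => s' [t' /= E].
  move/eqP: (coprime_md n u0) => G; rewrite G in E.
  by rewrite -E opprD addrA subrr add0r rpredN; apply: dvdz_mull; exact: dvdzz.
pose w n := modz (s n) (md n).
have wmod : forall n, modz (w n) (md n) = w n by move=> n; rewrite modz_mod.
have wcompat : forall n, modz (w n.+1) (md n) = w n.
  move=> n; rewrite /w red_md; apply/eqP; rewrite eqz_mod_dvd.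
  have cop : coprimez (md n) (pval u n) by rewrite coprimez_sym; exact: coprime_md.
  rewrite -(Gauss_dvdzl _ cop).
  have H1 : (md n %| s n.+1 * pval u n.+1 - 1)%Z.
    by apply: dvdz_trans (sP n.+1); apply: md_dvd.
  have H2 : (md n %| s n.+1 * (pval u n.+1 - pval u n))%Z.
    by apply: dvdz_mull; apply: pval_dvd.
  have H3 := sP n.
  have -> : (s n.+1 - s n) * pval u n =
     (s n.+1 * pval u n.+1 - 1) - s n.+1 * (pval u n.+1 - pval u n) - (s n * pval u n - 1).
    by rewrite mulrBl mulrBr; ring.
  by apply: rpredB => //; apply: rpredB.
exists (Padic wmod wcompat); apply: padic_eq; apply: funext => n /=.
rewrite /w modzMmr; apply/eqP; rewrite eqz_mod_dvd mulrC; exact: sP.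
Qed.

Lemma padic_val (a : Zp) : a != 0 ->
  exists k, exists2 u, punit u & a = (p ^ k)%:R * u.
Proof.
move=> /padic_neq0 ex.
have exb : exists n, pval a n != 0 by [].
case: (ex_minnP exb) => v av vmin.
have H0 : forall j, (j < v)%N -> pval a j = 0.
  move=> j jv; apply/eqP; apply/negPn/negP => aj.
  by have := vmin j aj; rewrite leqNgt jv.
case: (padic_divk H0) => b Eb.
exists v; exists b => //; apply: punit_digit.
apply/negP => /eqP b0; move/negP: av; apply.
have Hb : (p%:Z %| pval b v)%Z.
  by have := pval_dvd b (leq0n v); rewrite b0 subr0 expn1.
case/dvdzP: Hb => q Hq.
rewrite Eb pvalM pval_natr modzMml Hq.
apply/eqP/dvdz_mod0P.
have -> : (p ^ v)%N%:Z * (q * p) = q * md v.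
  by rewrite expnSr PoszM; ring.
by apply: dvdz_mull; exact: dvdzz.
Qed.

Lemma padic_digits (a : Zp) k : exists r : nat, (r < p ^ k)%N /\
  exists b : Zp, a = r%:R + (p ^ k)%:R * b.
Proof.
case: k => [|k]; first by exists 0%N; split => //; exists a; rewrite add0r expn0 mul1r.
exists `|pval a k|%N; split.
  by rewrite -ltz_nat gez0_abs ?pval_ge0 ?pval_lt.
have H0 : forall n, (n < k.+1)%N -> pval (a - `|pval a k|%N%:R) n = 0.
  move=> n nk; rewrite pvalB pval_natr gez0_abs ?pval_ge0 //.
  by rewrite pval_modle -1?ltnS // subrr mod0z.
case: (padic_divk H0) => b Eb; exists b.
by rewrite -Eb addrC subrK.
Qed.

Lemma padic_pid (I : Zp -> Prop) : (exists a, I a /\ a != 0) ->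
  exists g, I g /\ forall a, I a -> exists t, a = t * g.
Proof.
move=> [a0 [Ia0 a00]].
pose Q k := exists a, [/\ I a, a != 0 & exists2 u, punit u & a = (p ^ k)%:R * u].
have exQ : exists k, `[< Q k >].
  case: (padic_val a00) => k [u Hu E]; exists k; apply/asboolP.
  by exists a0; split => //; exists u.
case: (ex_minnP exQ) => k /asboolP [g [Ig g0 [u Hu Eg]]] kmin.
exists g; split => // a Ia.
have [->|a0'] := eqVneq a 0; first by exists 0; rewrite mul0r.
case: (padic_val a0') => j [u' Hu' Ea].
have kj : (k <= j)%N.
  by apply: kmin; apply/asboolP; exists a; split => //; exists u'.
case: Hu => w uw.
exists ((p ^ (j - k))%:R * u' * w).
have E : (p ^ j)%:R = (p ^ (j - k))%:R * (p ^ k)%:R :> Zp.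
  by rewrite -natrM -expnD subnK.
rewrite Ea Eg E.
by rewrite mulrACA [w * u]mulrC uw mulr1 mulrAC.
Qed.
End PadicFacts.

Section Spans.
Variables (R : comPzRingType) (V : lmodType R).
Implicit Types (S T M : V -> Prop).

Lemma span_min S M : submodule M -> (forall v, S v -> M v) ->
  forall v, span S v -> M v.
Proof.
move=> [M0 MD MZ] SM v; elim => [//|w /SM //|u w _ Hu _ Hw|a w _ Hw]; [exact: MD | exact: MZ].
Qed.

Lemma span_submod S : submodule (span S).
Proof. split; [exact: span0 | exact: span_add | exact: span_scale]. Qed.

Lemma span_mono S T : (forall v, S v -> T v) -> forall v, span S v -> span T v.
Proof. move=> ST; apply: span_min; first exact: span_submod.
by move=> v /ST; apply: span_gen. Qed.

Lemma submodN M u : submodule M -> M u -> M (- u).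
Proof. by case=> _ _ MZ Mu; rewrite -scaleN1r; apply: MZ. Qed.

Lemma submodB M u v : submodule M -> M u -> M v -> M (u - v).
Proof. move=> sM Mu Mv; case: (sM) => _ MD _; apply: MD => //; exact: submodN. Qed.

Lemma submod_sum M (I : Type) (r : seq I) (P : pred I) (F : I -> V) :
  submodule M -> (forall i, P i -> M (F i)) -> M (\sum_(i <- r | P i) F i).
Proof.
move=> [M0 MD MZ] H; elim/big_ind: _ => //.
Qed.

Lemma span_nil (v : V) : span (fun w => w \in [::]) v -> v = 0.
Proof.
elim => [//|w //|u w _ -> _ ->|a w _ ->]; by rewrite ?addr0 ?scaler0.
Qed.

Lemma span_cons (g : V) gs v : span (fun w => w \in g :: gs) v <->
  exists a s, span (fun w => w \in gs) s /\ v = a *: g + s.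
Proof.
split.
  elim.
  - by exists 0, 0; split; [exact: span0 | rewrite scale0r addr0].
  - move=> w; rewrite inE => /orP[/eqP ->|wg].
      by exists 1, 0; split; [exact: span0 | rewrite scale1r addr0].
    by exists 0, w; split; [exact: span_gen | rewrite scale0r add0r].
  - move=> u w _ [a [s [Hs ->]]] _ [b [t [Ht ->]]].
    exists (a + b), (s + t); split; first exact: span_add.
    by rewrite scalerDl -!addrA; congr (_ + _); rewrite addrCA.
  - move=> b w _ [a [s [Hs ->]]].
    exists (b * a), (b *: s); split; first exact: span_scale.
    by rewrite scalerDr scalerA.
move=> [a [s [Hs ->]]]; apply: span_add.
  by apply: span_scale; apply: span_gen; rewrite inE eqxx.
by apply: span_mono Hs => w wg; rewrite inE wg orbT.
Qed.
End Spans.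

Lemma zmod_aux (W : zmodType) (A B s r : W) : A + B + s + (- A - r) = B + (s - r).
Proof. by rewrite [A + B]addrC -!addrA [A + (s + _)]addrCA addNKr. Qed.

Section Rank.
Variable p : nat.
Hypothesis pr : prime p.
Variable V : lmodType (padic p).

Lemma rank_span (gs : seq V) (M : V -> Prop) : submodule M ->
  (forall v, M v -> span (fun w => w \in gs) v) ->
  exists hs : seq V, (size hs <= size gs)%N /\
    forall v, M v <-> span (fun w => w \in hs) v.
Proof.
elim: gs M => [|g gs IH] M sM MS.
  exists [::]; split => // v; split => [/MS/span_nil ->|/span_nil ->]; first exact: span0.
  by case: sM.
pose I a := exists m, M m /\ span (fun w => w \in gs) (m - a *: g).
have [Inz|I0] := pselect (exists a, I a /\ a != 0).
  case: (padic_pid pr Inz) => a0 [[m0 [Mm0 Hm0]] Ha0].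
  pose M' v := M v /\ span (fun w => w \in gs) v.
  have sM' : submodule M'.
    case: (sM) => M0 MD MZ; case: (span_submod (fun w => w \in gs)) => S0 SD SZ.
    split; first by split.
      by move=> u v [? ?] [? ?]; split; [apply: MD | apply: SD].
    by move=> a u [? ?]; split; [apply: MZ | apply: SZ].
  case: (IH M' sM') => [v [] //|hs [shs Hhs]].
  exists (m0 :: hs); split; first by rewrite /= ltnS.
  move=> v; split.
    move=> Mv; case/span_cons: (MS v Mv) => a [s [Hs Ev]].
    have Ia : I a by exists v; split => //; rewrite Ev addrC addKr.
    case: (Ha0 a Ia) => t Et.
    have M'v : M' (v - t *: m0).
      split; first by apply: submodB => //; case: sM => _ _ MZ; apply: MZ.
      have -> : v - t *: m0 = s - t *: (m0 - a0 *: g).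
        by rewrite Ev Et scalerBr scalerA opprB [_ *: g + s]addrC -addrA.
      apply: submodB; [exact: span_submod | exact: Hs |].
      by case: (span_submod (fun w => w \in gs)) => _ _ SZ; apply: SZ.
    apply/span_cons; exists t, (v - t *: m0); split; first by apply/Hhs.
    by rewrite addrC subrK.
  apply: span_min => // w; rewrite inE => /orP[/eqP -> //|wh].
  have Hw : span (fun w => w \in hs) w by apply: span_gen.
  by case: (proj2 (Hhs w) Hw).
have MS' : forall v, M v -> span (fun w => w \in gs) v.
  move=> v Mv; case/span_cons: (MS v Mv) => a [s [Hs Ev]].
  have Ia : I a by exists v; split => //; rewrite Ev addrC addKr.
  have a0 : a = 0.
    apply/eqP; apply/negPn/negP => an; apply: I0; by exists a.
  by rewrite Ev a0 scale0r add0r.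
case: (IH M sM MS') => hs [shs Hhs]; exists hs; split => //.
exact: (leq_trans shs).
Qed.

Fixpoint reps (k : nat) (gs : seq V) : seq V :=
  match gs with
  | [::] => [:: 0]
  | g :: gs' => [seq (n%:R *: g + r) | n <- iota 0 (p ^ k), r <- reps k gs']
  end.

Lemma size_reps k gs : size (reps k gs) = ((p ^ k) ^ (size gs))%N.
Proof. by elim: gs => //= g gs IH; rewrite size_allpairs size_iota IH expnS. Qed.

Lemma reps_ok k (gs : seq V) (L : V -> Prop) : submodule L ->
  (forall g, g \in gs -> L ((p ^ k)%:R *: g)) ->
  forall v, span (fun w => w \in gs) v -> exists2 r, r \in reps k gs & L (v - r).
Proof.
move=> sL; elim: gs => [|g gs IH] Hg v.
  by move/span_nil => ->; exists 0; rewrite ?inE // subrr; case: sL.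
case/span_cons => a [s [Hs ->]].
have [r rin Lr] := IH (fun g' g'in => Hg g' (mem_behead (s := g :: gs) g'in)) s Hs.
case: (padic_digits pr a k) => n [nk [b Eb]].
exists (n%:R *: g + r).
  by apply: allpairs_f => //; rewrite mem_iota add0n.
have -> : a *: g + s - (n%:R *: g + r) = b *: ((p ^ k)%:R *: g) + (s - r).
  by rewrite Eb scalerA (mulrC b) -scalerA scalerDl opprD -scalerA zmod_aux.
case: sL => _ LD LZ; apply: LD => //; apply: LZ; apply: Hg; exact: mem_head.
Qed.
End Rank.

Fixpoint Nseq (d k : nat) : nat := match k with 0 => 1%N | k'.+1 => (1 + d * Nseq d k')%N end.

Section LieW.
Variable p : nat.
Hypothesis pr : prime p.
Variable V : lmodType (padic p).
Variable br : V -> V -> V.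
Hypothesis Hbr : lie_bracket br.
Variables (L : V -> Prop) (c d : nat) (x : 'I_d -> V).
Hypothesis HL : lie_subalg br L.
Hypothesis HLx : forall v, L v <-> lie_span br (fun w => exists i, w = x i) v.
Hypothesis Hnil : forall v, gamma br L c.+1 v -> v = 0.
Local Notation P := (p%:R : padic p).
Variable q : V -> V.
Hypothesis qK : cancel (fun v => P *: v) q.
Hypothesis Kq : cancel q (fun v => P *: v).

Lemma self_add0 (X : V) : X = X + X -> X = 0.
Proof. by move=> E; apply: (@addrI _ X); rewrite addr0 -E. Qed.
Lemma brDZl a u v w : br (a *: u + v) w = a *: br u w + br v w.
Proof. by case: Hbr. Qed.
Lemma brDZr a u v w : br u (a *: v + w) = a *: br u v + br u w.
Proof. by case: Hbr. Qed.
Lemma br0l w : br 0 w = 0.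
Proof.
by apply: self_add0; have := brDZl 1 0 0 w; rewrite !scale1r addr0.
Qed.
Lemma br0r w : br w 0 = 0.
Proof.
by apply: self_add0; have := brDZr 1 w 0 0; rewrite !scale1r addr0.
Qed.
Lemma brDl u v w : br (u + v) w = br u w + br v w.
Proof. by rewrite -{1}[u]scale1r brDZl scale1r. Qed.
Lemma brDr u v w : br u (v + w) = br u v + br u w.
Proof. by rewrite -{1}[v]scale1r brDZr scale1r. Qed.
Lemma brZl a u w : br (a *: u) w = a *: br u w.
Proof. by rewrite -[a *: u]addr0 brDZl br0l addr0. Qed.
Lemma brZr a u w : br w (a *: u) = a *: br w u.
Proof. by rewrite -[a *: u]addr0 brDZr br0r addr0. Qed.
Lemma brNl u w : br (- u) w = - br u w.
Proof. by rewrite -scaleN1r brZl scaleN1r. Qed.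
Lemma brNr u w : br w (- u) = - br w u.
Proof. by rewrite -scaleN1r brZr scaleN1r. Qed.
Lemma br_anti u v : br u v = - br v u.
Proof.
have : br (u + v) (u + v) = 0 by case: Hbr.
rewrite brDl !brDr.
have [_ _ H _] := Hbr; rewrite !H add0r addr0 => /eqP.
by rewrite addr_eq0 => /eqP.
Qed.
Lemma br_jacobi u w z : br u (br w z) = br (br z u) w + br (br u w) z.
Proof.
have [_ _ _ J] := Hbr.
have E : br u (br w z) = - (br w (br z u) + br z (br u w)).
  by apply/eqP; rewrite -addr_eq0 addrA J.
by rewrite E opprD (br_anti w (br z u)) (br_anti z (br u w)) !opprK.
Qed.

Lemma submod_pre (M : V -> Prop) (f : V -> V) :
  (forall a u v, f (a *: u + v) = a *: f u + f v) ->
  submodule M -> submodule (fun u => M (f u)).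
Proof.
move=> lf [M0 MD MZ].
have f0 : f 0 = 0.
  by apply: self_add0; have := lf 1 0 0; rewrite !scale1r addr0.
split; first by rewrite f0.
  by move=> u v Mu Mv; rewrite -[u]scale1r lf scale1r; apply: MD.
by move=> a u Mu; rewrite -[a *: u]addr0 lf f0 addr0; apply: MZ.
Qed.

Lemma qZ a v : q (a *: v) = a *: q v.
Proof.
by apply: (can_inj qK) => /=; rewrite Kq scalerA mulrC -scalerA Kq.
Qed.
Lemma qD u v : q (u + v) = q u + q v.
Proof. by apply: (can_inj qK) => /=; rewrite scalerDr !Kq. Qed.
Lemma qlin a u v : q (a *: u + v) = a *: q u + q v.
Proof. by rewrite qD qZ. Qed.

Definition Q k := iter k q.
Lemma Qlin k a u v : Q k (a *: u + v) = a *: Q k u + Q k v.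
Proof. by elim: k => //= k IH; rewrite IH qlin. Qed.
Lemma Q0 k : Q k 0 = 0.
Proof. by apply: self_add0; have := Qlin k 1 0 0; rewrite !scale1r addr0. Qed.
Lemma QZ k a u : Q k (a *: u) = a *: Q k u.
Proof. by rewrite -[a *: u]addr0 Qlin Q0 addr0. Qed.
Lemma QS k v : Q k.+1 v = Q k (q v).
Proof. by rewrite /Q iterSr. Qed.
Lemma QK k v : P ^+ k *: Q k v = v.
Proof. elim: k v => [|k IH] v; first by rewrite expr0 scale1r.
by rewrite exprSr -scalerA QS -QZ Kq IH. Qed.
Lemma KQ k v : Q k (P ^+ k *: v) = v.
Proof. elim: k v => [|k IH] v; first by rewrite expr0 scale1r.
by rewrite exprSr -scalerA QS qZ qK IH. Qed.
Lemma QD j k v : Q j (Q k v) = Q (j + k) v.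
Proof. by rewrite /Q iterD. Qed.
Lemma brQl k u v : br (Q k u) v = Q k (br u v).
Proof.
by rewrite -{2}[u](QK k) brZl KQ.
Qed.
Lemma brQr k u v : br u (Q k v) = Q k (br u v).
Proof. by rewrite -{2}[v](QK k) brZr KQ. Qed.
Lemma QP j k v : (j <= k)%N -> Q j v = P ^+ (k - j) *: Q k v.
Proof. by move=> jk; rewrite -{2}(subnK jk) -QD QK. Qed.

Lemma pnat_exp k : ((p ^ k)%N%:R : padic p) = P ^+ k.
Proof. exact: natrX. Qed.


Definition comm (u : V) (js : seq 'I_d) := foldl (fun acc j => br acc (x j)) u js.
Lemma comm_rcons u js j : comm u (rcons js j) = br (comm u js) (x j).
Proof. by rewrite /comm foldl_rcons. Qed.

Definition Cgen m (v : V) := exists i js, (m <= (size js).+1)%N /\ v = comm (x i) js.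
Definition Sm m := span (Cgen m).

Lemma Sm_mono m n v : (m <= n)%N -> Sm n v -> Sm m v.
Proof.
move=> mn; apply: span_mono => w [i [js [H ->]]]; exists i, js; split => //.
exact: leq_trans H.
Qed.

Lemma Sm_sub m : submodule (Sm m).
Proof. exact: span_submod. Qed.

Lemma br_Sm_x a u j : Sm a u -> Sm a.+1 (br u (x j)).
Proof.
move: u; apply: (span_min (M := fun u => Sm a.+1 (br u (x j)))).
  by apply: (submod_pre (f := fun u => br u (x j))) => [a' u' v'|]; [exact: brDZl | exact: Sm_sub].
move=> v [i [js [H ->]]]; apply: span_gen; exists i, (rcons js j).
by rewrite size_rcons ltnS H comm_rcons.
Qed.

Lemma br_Sm_comm i js : forall a u, Sm a u ->
  Sm (a + (size js).+1) (br u (comm (x i) js)).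
Proof.
elim/last_ind: js => [|js j IH] a u Su.
  by rewrite addn1; exact: br_Sm_x.
rewrite comm_rcons br_jacobi size_rcons.
case: (Sm_sub (a + (size js).+2)) => _ SD _; apply: SD.
  rewrite -addSnnS; apply: IH.
  by rewrite br_anti; apply: submodN; [exact: Sm_sub | exact: br_Sm_x].
by rewrite addnS; apply: br_Sm_x; exact: IH.
Qed.

Lemma br_Sm a b u v : Sm a u -> Sm b v -> Sm (a + b) (br u v).
Proof.
move=> Su; move: v; apply: (span_min (M := fun v => Sm (a + b) (br u v))).
  by apply: (submod_pre (f := fun v => br u v)) => [a' u' v'|]; [exact: brDZr | exact: Sm_sub].
move=> v' [i [js [H ->]]]; apply: Sm_mono (br_Sm_comm i js Su).
by rewrite leq_add2l.
Qed.

Lemma x_L i : L (x i).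
Proof. by apply/HLx; apply: lspan_gen; exists i. Qed.

Lemma comm_L i js : L (comm (x i) js).
Proof.
elim/last_ind: js => [|js j IH]; first exact: x_L.
by rewrite comm_rcons; case: HL => _ H; apply: H => //; exact: x_L.
Qed.

Lemma gamma_sub k : submodule (gamma br L k).
Proof. by case: k => [|[|k]] /=; [case: HL | case: HL | exact: span_submod]. Qed.

Lemma comm_gamma i js : gamma br L (size js).+1 (comm (x i) js).
Proof.
elim/last_ind: js => [|js j IH]; first exact: x_L.
rewrite comm_rcons size_rcons /=; apply: span_gen.
exists (comm (x i) js), (x j); split => //; exact: x_L.
Qed.

Lemma comm0 js : comm 0 js = 0.
Proof. by elim/last_ind: js => [|js j IH] //; rewrite comm_rcons IH br0l. Qed.

Lemma comm_zero i js : (c < (size js).+1)%N -> comm (x i) js = 0.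
Proof.
move=> cs.
have sz : size (take c js) = c by rewrite size_takel // -ltnS.
have H0 : comm (x i) (take c js) = 0.
  by apply: Hnil; rewrite -{1}sz; apply: comm_gamma.
rewrite -(cat_take_drop c js) /comm foldl_cat.
by move: H0; rewrite /comm => ->; exact: comm0.
Qed.

Lemma Sm_big m v : (c < m)%N -> Sm m v -> v = 0.
Proof.
move=> cm; apply: (span_min (M := fun v => v = 0)).
  split => //; [by move=> u w -> ->; rewrite addr0 | by move=> a u ->; rewrite scaler0].
move=> w [i [js [H ->]]]; apply: comm_zero; exact: leq_trans H.
Qed.

Lemma L_S1 v : L v -> Sm 1 v.
Proof.
move/HLx; elim.
- exact: span0.
- by move=> w [i ->]; apply: span_gen; exists i, [::].
- by move=> u w _ Hu _ Hw; apply: span_add.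
- by move=> a w _ Hw; apply: span_scale.
- by move=> u w _ Hu _ Hw; apply: (Sm_mono (n := 2)) => //; exact: (br_Sm Hu Hw).
Qed.

Lemma gamma_S k v : (0 < k)%N -> gamma br L k v -> Sm k v.
Proof.
case: k => // k _; elim: k v => [|k IH] v; first exact: L_S1.
move=> /=; move: v; apply: span_min; first exact: Sm_sub.
move=> w [u [u' [Hu Hu' ->]]].
rewrite -addn1; apply: br_Sm; [exact: IH | exact: L_S1].
Qed.

Definition Hgen m (v : V) :=
  exists j i js, (j + m <= (size js).+1)%N /\ v = Q j (comm (x i) js).
Definition Hm m := span (Hgen m).

Lemma Hm_sub m : submodule (Hm m).
Proof. exact: span_submod. Qed.

Lemma QS_H j m v : Sm (j + m) v -> Hm m (Q j v).
Proof.
move: v; apply: (span_min (M := fun v => Hm m (Q j v))).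
  by apply: (submod_pre (f := Q j)) => [a' u' v'|]; [exact: Qlin | exact: Hm_sub].
move=> v [i [js [H ->]]]; apply: span_gen; by exists j, i, js.
Qed.

Lemma br_H a b u v : Hm a u -> Hm b v -> Hm (a + b) (br u v).
Proof.
move=> Hu Hv; move: u Hu; apply: (span_min (M := fun u => Hm (a + b) (br u v))).
  by apply: (submod_pre (f := fun u => br u v)) => [a' u' v'|]; [exact: brDZl | exact: Hm_sub].
move=> u [j [i [js [H ->]]]]; move: v Hv.
apply: (span_min (M := fun v => Hm (a + b) (br (Q j (comm (x i) js)) v))).
  by apply: (submod_pre (f := fun v => br _ v)) => [a' u' v'|]; [exact: brDZr | exact: Hm_sub].
move=> v [k [i' [js' [H' ->]]]].
rewrite brQl brQr QD; apply: QS_H.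
have S1 : Sm (j + a) (comm (x i) js) by apply: span_gen; exists i, js.
have S2 : Sm (k + b) (comm (x i') js') by apply: span_gen; exists i', js'.
by have := br_Sm S1 S2; rewrite addnACA.
Qed.

Lemma H_big m v : (c < m)%N -> Hm m v -> v = 0.
Proof.
move=> cm; move: v; apply: (span_min (M := fun v => v = 0)).
  split => //; [by move=> u w -> ->; rewrite addr0 | by move=> a u ->; rewrite scaler0].
move=> w [j [i [js [H ->]]]]; rewrite comm_zero ?Q0 //.
apply: (leq_trans _ H); exact: leq_trans cm (leq_addl j m).
Qed.

Lemma H_P m v : Hm m.+1 v -> exists u, Hm m u /\ v = P *: u.
Proof.
move: v; apply: (span_min (M := fun v => exists u, Hm m u /\ v = P *: u)).
  split; first by exists 0; split; [exact: span0 | rewrite scaler0].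
    move=> u v [u' [Hu ->]] [v' [Hv ->]]; exists (u' + v'); split; first exact: span_add.
    by rewrite scalerDr.
  move=> a u [u' [Hu ->]]; exists (a *: u'); split; first exact: span_scale.
  by rewrite !scalerA mulrC.
move=> w [j [i [js [H ->]]]]; exists (Q j.+1 (comm (x i) js)); split.
  by apply: span_gen; exists j.+1, i, js; rewrite addSnnS.
by rewrite QS -QZ Kq.
Qed.


Lemma gamma0 k : gamma br L k 0.
Proof. by case: (gamma_sub k). Qed.

Lemma Lhat_sub : submodule (Lhat br L c).
Proof.
split.
- exists (fun _ => 0); split; first by rewrite big1.
  by move=> i; rewrite scaler0; exact: gamma0.
- move=> u v [vs [-> Hv]] [ws [-> Hw]]; exists (fun i => vs i + ws i); split.
    by rewrite big_split.
  by move=> i; rewrite scalerDr; case: (gamma_sub i.+1) => _ GD _; apply: GD.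
- move=> a u [vs [-> Hv]]; exists (fun i => a *: vs i); split.
    by rewrite scaler_sumr.
  move=> i; rewrite scalerA mulrC -scalerA.
  by case: (gamma_sub i.+1) => _ _ GZ; apply: GZ.
Qed.

Lemma Lhat_H1 v : Lhat br L c v -> Hm 1 v.
Proof.
move=> [vs [-> Hv]]; apply: submod_sum; first exact: Hm_sub.
move=> i _; have := gamma_S (ltn0Sn i) (Hv i); rewrite pnat_exp => H.
by rewrite -(KQ i (vs i)); apply: QS_H; rewrite addn1.
Qed.

Lemma commQ_Lhat i js : (size js < c)%N ->
  Lhat br L c (Q (size js) (comm (x i) js)).
Proof.
move=> sc; pose s := Ordinal sc.
exists (fun k : 'I_c => if k == s then Q (size js) (comm (x i) js) else 0); split.
  rewrite (bigD1 s) //= eqxx big1 ?addr0 //.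
  by move=> k /negbTE ->.
move=> k; case: (eqVneq k s) => [->|ks].
  by rewrite pnat_exp QK; exact: comm_gamma.
by rewrite scaler0; exact: gamma0.
Qed.

Lemma H1_Lhat v : Hm 1 v -> Lhat br L c v.
Proof.
move: v; apply: span_min; first exact: Lhat_sub.
move=> w [j [i [js [H ->]]]].
case: (ltnP c (size js).+1) => cs.
  rewrite comm_zero // Q0; case: Lhat_sub => //.
rewrite (QP (k := size js)); last by rewrite -ltnS -addn1.
by case: Lhat_sub => _ _ LZ; apply: LZ; apply: commQ_Lhat.
Qed.


Hypothesis c0 : (0 < c)%N.

Fixpoint allseqs (k : nat) : seq (seq 'I_d) :=
  match k with
  | 0 => [:: [::]]
  | k'.+1 => [::] :: [seq j :: s | j <- enum 'I_d, s <- allseqs k']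
  end.

Lemma allseqs_mem k js : (size js <= k)%N -> js \in allseqs k.
Proof.
elim: k js => [|k IH] [|j js] //= H.
by rewrite inE; apply/orP; right; apply: allpairs_f; [rewrite mem_enum | apply: IH].
Qed.

Lemma allseqs_size k js : js \in allseqs k -> (size js <= k)%N.
Proof.
elim: k js => [|k IH] js /=; first by rewrite inE => /eqP ->.
rewrite inE => /orP[/eqP -> //|/allpairsP [[j s] [_ sin ->]]] /=.
by rewrite ltnS; apply: IH.
Qed.

Lemma size_allseqs k : size (allseqs k) = Nseq d k.
Proof. by elim: k => //= k IH; rewrite size_allpairs size_enum_ord IH. Qed.

Definition G := [seq Q (size js) (comm (x i) js) | i <- enum 'I_d, js <- allseqs c.-1].

Lemma size_G : size G = (d * Nseq d c.-1)%N.
Proof. by rewrite size_allpairs size_enum_ord size_allseqs. Qed.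

Lemma G_Lhat g : g \in G -> Lhat br L c g.
Proof.
case/allpairsP => [[i js] [_ jsin ->]] /=; apply: commQ_Lhat.
by have := allseqs_size jsin; rewrite -ltnS prednK.
Qed.

Lemma H1_G v : Hm 1 v -> span (fun w => w \in G) v.
Proof.
move: v; apply: span_min; first exact: span_submod.
move=> w [j [i [js [H ->]]]].
case: (ltnP c (size js).+1) => cs.
  by rewrite comm_zero // Q0; exact: span0.
rewrite (QP (k := size js)); last by rewrite -ltnS -addn1.
apply: span_scale; apply: span_gen; apply: allpairs_f; first by rewrite mem_enum.
by apply: allseqs_mem; rewrite -ltnS prednK.
Qed.

Lemma G_L g : g \in G -> L ((p ^ c.-1)%:R *: g).
Proof.
case/allpairsP => [[i js] [_ jsin ->]] /=.
have sj := allseqs_size jsin.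
rewrite pnat_exp -(subnK sj) exprD -scalerA QK.
by case: HL => [[_ _ LZ] _]; apply: LZ; exact: comm_L.
Qed.

Lemma Lhat_gamma k v : (0 < k)%N -> gamma br (Lhat br L c) k v -> Hm k v.
Proof.
case: k => // k _; elim: k v => [|k IH] v; first exact: Lhat_H1.
move=> /=; move: v; apply: span_min; first exact: Hm_sub.
move=> w [u [u' [Hu Hu' ->]]].
rewrite -addn1; apply: br_H; [exact: IH | exact: Lhat_H1].
Qed.

Lemma Lhat_br u v : Lhat br L c u -> Lhat br L c v -> exists2 w, Lhat br L c w & br u v = P *: w.
Proof.
move=> /Lhat_H1 Hu /Lhat_H1 Hv.
case: (H_P (br_H Hu Hv)) => w [Hw ->]; exists w => //; exact: H1_Lhat.
Qed.

Lemma part_a : [/\ lie_subalg br (Lhat br L c), lie_fin_gen br (Lhat br L c),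
         powerful br (Lhat br L c) & nil_class br (Lhat br L c) c].
Proof.
have LS : lie_subalg br (Lhat br L c).
  split; first exact: Lhat_sub.
  move=> u v Hu Hv; case: (Lhat_br Hu Hv) => w Hw ->.
  by case: Lhat_sub => _ _ LZ; apply: LZ.
split => //.
- exists G => v; split.
    move=> /Lhat_H1 /H1_G; move: v; apply: span_min.
      by split; [exact: lspan0 | exact: lspan_add | exact: lspan_scale].
    by move=> w wG; apply: lspan_gen.
  elim.
  + by case: Lhat_sub.
  + exact: G_Lhat.
  + by move=> u w _ Hu _ Hw; case: Lhat_sub => _ LD _; apply: LD.
  + by move=> a w _ Hw; case: Lhat_sub => _ _ LZ; apply: LZ.
  + by move=> u w _ Hu _ Hw; case: LS => _ LB; apply: LB.
- move=> w Hw.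
  have H2 : Hm 2 w.
    move: w Hw; apply: span_min; first exact: Hm_sub.
    move=> w [u [v [Hu Hv ->]]]; exact: (br_H (Lhat_H1 Hu) (Lhat_H1 Hv)).
  case: (H_P H2) => u [Hu ->]; exists u; split => //; exact: H1_Lhat.
- move=> v /(Lhat_gamma (ltn0Sn c)); exact: H_big.
Qed.

Lemma part_b : rank_le (Lhat br L c) (d * Nseq d c.-1).
Proof.
move=> M sM ML.
have := rank_span pr sM (fun v Mv => H1_G (Lhat_H1 (ML v Mv))).
by rewrite size_G.
Qed.

Lemma part_c : index_le L (Lhat br L c) ((p ^ c.-1) ^ (d * Nseq d c.-1)).
Proof.
split.
  move=> v /L_S1 H; apply: H1_Lhat; exact: (QS_H (j := 0) H).
exists (reps c.-1 G); split; first by rewrite size_reps size_G.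
move=> v /Lhat_H1 /H1_G; apply: reps_ok => //; first by case: HL.
exact: G_L.
Qed.

End LieW.

Theorem lemma3p2 :
  (forall (p c d : nat), prime p -> (0 < c)%N -> (0 < d)%N ->
   forall (V : lmodType (padic p)) (br : V -> V -> V) (L : V -> Prop)
          (x : 'I_d -> V),
     lie_bracket br -> free_nilpotent_on br L c x -> qp_envelope L ->
     [/\ lie_subalg br (Lhat br L c), lie_fin_gen br (Lhat br L c),
         powerful br (Lhat br L c) & nil_class br (Lhat br L c) c])
  /\
  (exists f : nat -> nat -> nat,
   forall (p c d : nat), prime p -> (0 < c)%N -> (0 < d)%N ->
   forall (V : lmodType (padic p)) (br : V -> V -> V) (L : V -> Prop)
          (x : 'I_d -> V),
     lie_bracket br -> free_nilpotent_on br L c x -> qp_envelope L ->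
     rank_le (Lhat br L c) (f c d))
  /\
  (exists g : nat -> nat -> nat -> nat,
   forall (p c d : nat), prime p -> (0 < c)%N -> (0 < d)%N ->
   forall (V : lmodType (padic p)) (br : V -> V -> V) (L : V -> Prop)
          (x : 'I_d -> V),
     lie_bracket br -> free_nilpotent_on br L c x -> qp_envelope L ->
     index_le L (Lhat br L c) (g p c d)).
Proof.
split; last split.
- move=> p c d pr c0 _ V br L x Hbr [HL HLx Hnil _] [[q qK Kq] _].
  exact: (part_a Hbr HL HLx Hnil qK Kq c0).
- exists (fun c d => (d * Nseq d c.-1)%N).
  move=> p c d pr c0 _ V br L x Hbr [HL HLx Hnil _] [[q qK Kq] _].
  exact: (part_b pr Hbr HLx Hnil qK Kq c0).
- exists (fun p c d => ((p ^ c.-1) ^ (d * Nseq d c.-1))%N).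
  move=> p c d pr c0 _ V br L x Hbr [HL HLx Hnil _] [[q qK Kq] _].
  exact: (part_c pr Hbr HL HLx Hnil qK Kq c0).
Qed.
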